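(* For every Schauder basic spreading sequence $(e_n)_n$ there exists $(\widetilde e_n)_n\in\mathcal{SM}_2(c_0)$ equivalent to $(e_n)_n$. Moreover, if $(e_n)_n$ is bimonotone, then $(e_n)_n$ itself (up to isometric equivalence) belongs to $\mathcal{SM}_2(c_0)$.
   Context: A sequence $(e_n)$ in a seminormed space $(E,\|\cdot\|_* )$ is spreading if $\|\sum_{j=1}^n a_je_j\|_*=\|\sum_{j=1}^n a_je_{k_j}\|_*$ for all $n$, $k_1<\dots<k_n$, reals $a_j$. $[M]^2$: 2-subsets of $M\subseteq\mathbb{N}$ (increasing enumerations, $M(l)$ the $l$-th element). A plegma family in $[M]^2$ is $(s_j)_{j=1}^l$ with $s_1(1)<\dots<s_l(1)<s_1(2)<\dots<s_l(2)$. A 2-sequence $(x_s)_{s\in[\mathbb{N}]^2}$ in a Banach space $X$ generates the Hamel basis $(e_n)$ of $(E,\|\cdot\|_* )$ as a $2$-spreading model via infinite $M$ if for a null sequence $\delta_l>0$: $|\|\sum_{j=1}^m a_jx_{s_j}\|-\|\sum_{j=1}^m a_je_j\|_*|\le\delta_l$ for all $m\le l$, plegma $(s_j)_{j=1}^m$ in $[M]^2$ with $s_1(1)\ge M(l)$, $a_j\in[-1,1]$. $\mathcal{SM}_2(X)$ is the set of sequences arising this way from 2-sequences in $X$. Bimonotone: $\|\sum_{i=p}^q a_ie_i\|\le\|\sum_{i=1}^n a_ie_i\|$ for all $1\le p\le q\le n$. *)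

(* Defs.v *)
From Stdlib Require Import Reals Lra Lia ClassicalEpsilon.
Open Scope R_scope.

Record SNSpace := {
  car :> Type;
  vzero : car;
  vadd : car -> car -> car;
  vscal : R -> car -> car;
  snorm : car -> R;
  vadd_assoc : forall x y z, vadd x (vadd y z) = vadd (vadd x y) z;
  vadd_comm : forall x y, vadd x y = vadd y x;
  vadd_0 : forall x, vadd x vzero = x;
  vadd_opp : forall x, vadd x (vscal (-1) x) = vzero;
  vscal_1 : forall x, vscal 1 x = x;
  vscal_assoc : forall a b x, vscal a (vscal b x) = vscal (a * b) x;
  vscal_distr_v : forall a x y, vscal a (vadd x y) = vadd (vscal a x) (vscal a y);
  vscal_distr_s : forall a b x, vscal (a + b) x = vadd (vscal a x) (vscal b x);
  snorm_scal : forall a x, snorm (vscal a x) = Rabs a * snorm x;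
  snorm_triangle : forall x y, snorm (vadd x y) <= snorm x + snorm y
}.

(** [lincomb E a e k] = sum_{j<k} a_j e_j  (0-based indices: paper's e_{j+1} is [e j]). *)
Fixpoint lincomb (E : SNSpace) (a : nat -> R) (e : nat -> E) (k : nat) : E :=
  match k with
  | O => vzero E
  | S k' => vadd E (lincomb E a e k') (vscal E (a k') (e k'))
  end.

Fixpoint rsum (g : nat -> R) (k : nat) : R :=
  match k with O => 0 | S k' => rsum g k' + g k' end.

Definition hamel_basis (E : SNSpace) (e : nat -> E) : Prop :=
  (forall a k, lincomb E a e k = vzero E -> forall j, (j < k)%nat -> a j = 0) /\
  (forall x : E, exists a k, x = lincomb E a e k).

Definition spreading (E : SNSpace) (e : nat -> E) : Prop :=
  forall (n : nat) (p : nat -> nat) (a : nat -> R),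
    (forall i j, (i < j < n)%nat -> (p i < p j)%nat) ->
    snorm E (lincomb E a e n) = snorm E (lincomb E a (fun j => e (p j)) n).

(** Schauder basic (Grunblum criterion): nonzero vectors, uniformly bounded
    initial-segment projections. *)
Definition schauder_basic (E : SNSpace) (e : nat -> E) : Prop :=
  (forall n, snorm E (e n) <> 0) /\
  exists K, forall (a : nat -> R) (m n : nat), (m <= n)%nat ->
    snorm E (lincomb E a e m) <= K * snorm E (lincomb E a e n).

Definition bimonotone (E : SNSpace) (e : nat -> E) : Prop :=
  forall (a : nat -> R) (p q n : nat), (p <= q < n)%nat ->
    snorm E (lincomb E (fun i => if andb (Nat.leb p i) (Nat.leb i q) then a i else 0) e n)
    <= snorm E (lincomb E a e n).

Definition equivalent (E F : SNSpace) (e : nat -> E) (f : nat -> F) : Prop :=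
  exists c C, 0 < c /\ 0 < C /\
    forall (a : nat -> R) (n : nat),
      c * snorm E (lincomb E a e n) <= snorm F (lincomb F a f n) /\
      snorm F (lincomb F a f n) <= C * snorm E (lincomb E a e n).

Definition isometrically_equivalent (E F : SNSpace) (e : nat -> E) (f : nat -> F) : Prop :=
  forall (a : nat -> R) (n : nat), snorm E (lincomb E a e n) = snorm F (lincomb F a f n).

Definition in_c0 (x : nat -> R) : Prop := Un_cv x 0.

Definition supnorm (x : nat -> R) : R :=
  epsilon (inhabits 0) (fun r => is_lub (fun y => exists n, y = Rabs (x n)) r).

(** Infinite M ⊆ ℕ given by its strictly increasing enumeration [M]
    (paper's M(l), l >= 1, is [M (l-1)]). *)
Definition strictly_increasing (M : nat -> nat) : Prop :=
  forall i j, (i < j)%nat -> (M i < M j)%nat.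

Definition in_range (M : nat -> nat) (n : nat) : Prop := exists i, M i = n.

(** A plegma family (s_j)_{j<m} in [M]^2 ; a 2-subset s is a pair (s(1), s(2)). *)
Definition plegma (M : nat -> nat) (s : nat -> nat * nat) (m : nat) : Prop :=
  (forall j, (j < m)%nat ->
     in_range M (fst (s j)) /\ in_range M (snd (s j)) /\ (fst (s j) < snd (s j))%nat) /\
  (forall j, (S j < m)%nat ->
     (fst (s j) < fst (s (S j)))%nat /\ (snd (s j) < snd (s (S j)))%nat) /\
  ((0 < m)%nat -> (fst (s (pred m)) < snd (s 0%nat))%nat).

Definition generates_2SM_c0 (x : nat -> nat -> (nat -> R)) (E : SNSpace) (e : nat -> E)
    (M : nat -> nat) : Prop :=
  exists delta : nat -> R,
    (forall l, 0 < delta l) /\ Un_cv delta 0 /\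
    forall (l m : nat) (s : nat -> nat * nat) (a : nat -> R),
      (1 <= l)%nat -> (1 <= m <= l)%nat -> plegma M s m ->
      (M (pred l) <= fst (s 0%nat))%nat ->
      (forall j, (j < m)%nat -> -1 <= a j <= 1) ->
      Rabs (supnorm (fun n => rsum (fun j => a j * x (fst (s j)) (snd (s j)) n) m)
            - snorm E (lincomb E a e m)) <= delta l.

Definition in_SM2_c0 (E : SNSpace) (e : nat -> E) : Prop :=
  hamel_basis E e /\
  exists (x : nat -> nat -> (nat -> R)) (M : nat -> nat),
    (forall s1 s2, (s1 < s2)%nat -> in_c0 (x s1 s2)) /\
    strictly_increasing M /\
    generates_2SM_c0 x E e M.

(* Main.v *)
Require Import Defs.
From Stdlib Require Import Reals.
From Stdlib Require Import Lra Lia ClassicalEpsilon FunctionalExtensionality ProofIrrelevance List.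
Import ListNotations.
Open Scope R_scope.


Lemma rsum_ext : forall f g k, (forall i, (i < k)%nat -> f i = g i) -> rsum f k = rsum g k.
Proof. intros f g k; induction k; intros H; simpl; auto. rewrite IHk by (intros; apply H; lia). rewrite (H k) by lia; auto. Qed.

Lemma rsum_plus : forall f g k, rsum (fun i => f i + g i) k = rsum f k + rsum g k.
Proof. intros f g k; induction k; simpl; [lra|]. rewrite IHk; lra. Qed.

Lemma rsum_scal : forall c f k, rsum (fun i => c * f i) k = c * rsum f k.
Proof. intros c f k; induction k; simpl; [lra|]. rewrite IHk; lra. Qed.

Lemma rsum_zero : forall f k, (forall i, (i < k)%nat -> f i = 0) -> rsum f k = 0.
Proof. intros f k; induction k; intros H; simpl; auto. rewrite IHk by (intros; apply H; lia). rewrite H by lia; lra. Qed.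

Lemma rsum_le : forall f g k, (forall i, (i < k)%nat -> f i <= g i) -> rsum f k <= rsum g k.
Proof. intros f g k; induction k; intros H; simpl; [lra|]. pose proof (H k ltac:(lia)). pose proof (IHk ltac:(intros; apply H; lia)). lra. Qed.

Lemma rsum_const_le : forall f k B, (forall i, (i < k)%nat -> f i <= B) -> rsum f k <= INR k * B.
Proof. intros f k B; induction k; intros H; [simpl; lra|]. change (rsum f (S k)) with (rsum f k + f k). rewrite S_INR. pose proof (H k ltac:(lia)). pose proof (IHk ltac:(intros; apply H; lia)). lra. Qed.

Lemma rsum_delta : forall (c : nat -> R) j K,
  rsum (fun i => if Nat.eqb j i then c i else 0) K = if Nat.ltb j K then c j else 0.
Proof.
  intros c j K; induction K; simpl.
  - destruct (Nat.ltb j 0) eqn:E; [apply Nat.ltb_lt in E; lia| auto].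
  - rewrite IHK. destruct (Nat.eqb j K) eqn:E1.
    + apply Nat.eqb_eq in E1; subst. replace (Nat.ltb K K) with false by (symmetry; apply Nat.ltb_ge; lia).
      replace (Nat.ltb K (S K)) with true by (symmetry; apply Nat.ltb_lt; lia). lra.
    + apply Nat.eqb_neq in E1. destruct (Nat.ltb j K) eqn:E2.
      * replace (Nat.ltb j (S K)) with true by (symmetry; apply Nat.ltb_lt; apply Nat.ltb_lt in E2; lia). lra.
      * replace (Nat.ltb j (S K)) with false by (symmetry; apply Nat.ltb_ge; apply Nat.ltb_ge in E2; lia). lra.
Qed.

Definition dot (K : nat) (c u : nat -> R) : R := rsum (fun i => c i * u i) K.

Definition is_glb (S : R -> Prop) (r : R) : Prop :=
  (forall y, S y -> r <= y) /\ (forall b, (forall y, S y -> b <= y) -> b <= r).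

Lemma rglb_exists : forall S : R -> Prop, (exists y, S y) -> (exists b, forall y, S y -> b <= y) ->
  exists r, is_glb S r.
Proof.
  intros S [y Hy] [b Hb].
  destruct (completeness (fun z => S (- z))) as [m [Hm1 Hm2]].
  - exists (- b). intros z Hz. apply Hb in Hz. lra.
  - exists (- y). rewrite Ropp_involutive. auto.
  - exists (- m). split.
    + intros y' Hy'. assert (- y' <= m). { apply Hm1. rewrite Ropp_involutive; auto. } lra.
    + intros b' Hb'. assert (m <= - b'). { apply Hm2. intros z Hz. apply Hb' in Hz. lra. } lra.
Qed.

Definition rglb (S : R -> Prop) : R := epsilon (inhabits 0) (fun r => is_glb S r).

Lemma rglb_spec : forall S, (exists y, S y) -> (exists b, forall y, S y -> b <= y) -> is_glb S (rglb S).
Proof. intros S H1 H2. unfold rglb. apply epsilon_spec. apply rglb_exists; auto. Qed.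

Lemma subgrad : forall (g : R -> R) t0,
  (forall t d, 0 < t -> 0 < d -> (t + d) * g t0 <= t * g (t0 - d) + d * g (t0 + t)) ->
  exists c, forall t, g t0 + c * (t - t0) <= g t.
Proof.
  intros g t0 H.
  assert (Key : forall d t, 0 < d -> 0 < t -> (g t0 - g (t0 - d)) / d <= (g (t0 + t) - g t0) / t).
  { intros d t Hd Ht. pose proof (H t d Ht Hd).
    apply Rmult_le_reg_r with (d * t). nra.
    replace ((g t0 - g (t0 - d)) / d * (d * t)) with ((g t0 - g (t0 - d)) * t) by (field; lra).
    replace ((g (t0 + t) - g t0) / t * (d * t)) with ((g (t0 + t) - g t0) * d) by (field; lra). nra. }
  destruct (completeness (fun y => exists d, 0 < d /\ y = (g t0 - g (t0 - d)) / d)) as [c [Hc1 Hc2]].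
  - exists ((g (t0 + 1) - g t0) / 1). intros y [d [Hd ->]]. apply Key; lra.
  - exists ((g t0 - g (t0 - 1)) / 1). exists 1; split; lra.
  - exists c. intros t. destruct (Rtotal_order t t0) as [Hlt|[Heq|Hgt]].
    + assert (Hy : (g t0 - g (t0 - (t0 - t))) / (t0 - t) <= c). { apply Hc1. exists (t0 - t); split; [lra|auto]. }
      replace (t0 - (t0 - t)) with t in Hy by ring.
      apply Rmult_le_compat_r with (r := t0 - t) in Hy; [|lra].
      replace ((g t0 - g t) / (t0 - t) * (t0 - t)) with (g t0 - g t) in Hy by (field; lra). nra.
    + subst. lra.
    + assert (Hy : c <= (g (t0 + (t - t0)) - g t0) / (t - t0)).
      { apply Hc2. intros y [d [Hd ->]]. apply Key; lra. }
      replace (t0 + (t - t0)) with t in Hy by ring.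
      apply Rmult_le_compat_r with (r := t - t0) in Hy; [|lra].
      replace ((g t - g t0) / (t - t0) * (t - t0)) with (g t - g t0) in Hy by (field; lra). nra.
Qed.

Ltac bdec := repeat match goal with
 | |- context [Nat.ltb ?a ?b] => destruct (Nat.ltb_spec a b)
 | |- context [Nat.leb ?a ?b] => destruct (Nat.leb_spec a b)
 | |- context [Nat.eqb ?a ?b] => destruct (Nat.eqb_spec a b)
 end.


Definition sublin (K : nat) (p : (nat -> R) -> R) : Prop :=
  (forall u v, (forall i, (i < K)%nat -> u i = v i) -> p u = p v) /\
  (forall u v, p (fun i => u i + v i) <= p u + p v) /\
  (forall t u, 0 < t -> p (fun i => t * u i) = t * p u).

Lemma HB : forall K p, sublin K p -> forall v, exists c, (forall u, dot K c u <= p u) /\ dot K c v = p v.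
Proof.
  induction K as [|K IH]; intros p [Hext [Hadd Hhom]] v.
  - assert (Hz : forall u, p u = 0).
    { intros u. assert (E1 : p u = p (fun _ => 0)) by (apply Hext; intros; lia).
      assert (E2 : p (fun i => 2 * 0) = 2 * p (fun _ => 0)) by (apply (Hhom 2 (fun _ => 0)); lra).
      assert (E3 : p (fun i : nat => 2 * 0) = p (fun _ => 0)) by (apply Hext; intros; lia). lra. }
    exists (fun _ => 0). unfold dot; simpl. split; [intros u|]; rewrite Hz; lra.
  - set (eK := fun i => if Nat.eqb i K then 1 else 0).
    set (cut := fun (u : nat -> R) i => if Nat.ltb i K then u i else 0).
    set (g := fun t => p (fun i => cut v i + t * eK i)).
    destruct (subgrad g (v K)) as [cK HcK].
    { intros t d Ht Hd. unfold g.
      rewrite <- Hhom by lra. rewrite <- (Hhom t) by lra. rewrite <- (Hhom d) by lra.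
      eapply Rle_trans; [|apply Hadd]. right. f_equal. apply functional_extensionality. intros i. ring. }
    set (Qf := fun u t => p (fun i => cut u i + t * eK i) - t * cK).
    set (q := fun u => rglb (fun y : R => exists t, y = Qf u t)).
    assert (Hq : forall u, is_glb (fun y : R => exists t, y = Qf u t) (q u)).
    { intros u. apply rglb_spec. exists (Qf u 0); exists 0; auto.
      exists (g (v K) - cK * v K - p (fun i => cut v i - cut u i)). intros y [t ->]. unfold Qf.
      pose proof (HcK t). unfold g in *.
      assert (p (fun i => cut v i + t * eK i) <= p (fun i => cut u i + t * eK i) + p (fun i => cut v i - cut u i)).
      { eapply Rle_trans; [|apply Hadd]. right. f_equal. apply functional_extensionality. intros i. ring. }
      lra. }
    assert (qle : forall u t, q u <= Qf u t). { intros u t. apply (proj1 (Hq u)). exists t; auto. }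
    assert (qge : forall u b, (forall t, b <= Qf u t) -> b <= q u).
    { intros u b Hb. apply (proj2 (Hq u)). intros y [t ->]. auto. }
    assert (Hsq : sublin K q).
    { split; [|split].
      - intros u w Huw. assert (cut u = cut w).
        { apply functional_extensionality; intros i. unfold cut. destruct (Nat.ltb i K) eqn:E; auto.
          apply Huw. apply Nat.ltb_lt; auto. }
        unfold q, Qf. rewrite H. auto.
      - intros u w.
        assert (Hs : forall t1 t2, q (fun i => u i + w i) <= Qf u t1 + Qf w t2).
        { intros t1 t2. eapply Rle_trans; [apply (qle _ (t1 + t2))|]. unfold Qf.
          assert (p (fun i => cut (fun i0 => u i0 + w i0) i + (t1 + t2) * eK i) <=
                  p (fun i => cut u i + t1 * eK i) + p (fun i => cut w i + t2 * eK i)).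
          { eapply Rle_trans; [|apply Hadd]. right. f_equal. apply functional_extensionality. intros i.
            unfold cut. destruct (Nat.ltb i K); ring. }
          lra. }
        assert (H2 : forall t2, q (fun i => u i + w i) - Qf w t2 <= q u).
        { intros t2. apply qge. intros t1. pose proof (Hs t1 t2). lra. }
        assert (q (fun i => u i + w i) - q u <= q w). { apply qge. intros t2. pose proof (H2 t2). lra. }
        lra.
      - intros t u Ht.
        assert (Hsc : forall s, Qf (fun i => t * u i) (t * s) = t * Qf u s).
        { intros s. unfold Qf. rewrite Rmult_minus_distr_l. rewrite <- Hhom by lra. f_equal; [|ring]. f_equal.
          apply functional_extensionality. intros i. unfold cut. destruct (Nat.ltb i K); ring. }
        apply Rle_antisym.
        + assert (q (fun i => t * u i) / t <= q u).
          { apply qge. intros s. pose proof (qle (fun i => t * u i) (t * s)). rewrite Hsc in H.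
            apply Rmult_le_reg_r with t; auto. replace (q (fun i => t * u i) / t * t) with (q (fun i => t * u i)) by (field; lra). lra. }
          apply Rmult_le_compat_r with (r := t) in H; [|lra].
          replace (q (fun i => t * u i) / t * t) with (q (fun i => t * u i)) in H by (field; lra). lra.
        + apply qge. intros s. pose proof (qle u (s / t)). pose proof (Hsc (s / t)).
          replace (t * (s / t)) with s in H0 by (field; lra). nra. }
    destruct (IH q Hsq v) as [c' [Hc'1 Hc'2]].
    exists (fun i => if Nat.eqb i K then cK else c' i).
    assert (Hdot : forall u, dot (S K) (fun i => if Nat.eqb i K then cK else c' i) u = dot K c' u + cK * u K).
    { intros u. unfold dot. simpl. rewrite Nat.eqb_refl. f_equal. apply rsum_ext. intros i Hi.
      replace (Nat.eqb i K) with false by (symmetry; apply Nat.eqb_neq; lia). auto. }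
    assert (Hpu : forall u, p u = p (fun i => cut u i + u K * eK i)).
    { intros u. apply Hext. intros i Hi. unfold cut, eK. destruct (Nat.ltb i K) eqn:E1.
      - apply Nat.ltb_lt in E1. replace (Nat.eqb i K) with false by (symmetry; apply Nat.eqb_neq; lia). ring.
      - apply Nat.ltb_ge in E1. replace i with K by lia. rewrite Nat.eqb_refl. ring. }
    split.
    + intros u. rewrite Hdot. pose proof (Hc'1 u). pose proof (qle u (u K)). unfold Qf in H0.
      rewrite (Hpu u). lra.
    + rewrite Hdot, Hc'2. apply Rle_antisym.
      * pose proof (qle v (v K)). unfold Qf in H. rewrite (Hpu v). lra.
      * assert (p v - cK * v K <= q v).
        { apply qge. intros t. unfold Qf. pose proof (HcK t). unfold g in H. rewrite (Hpu v). lra. }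
        lra.
Qed.


Definition restr (a : nat -> R) (p q : nat) : nat -> R :=
  fun i => if andb (Nat.leb p i) (Nat.leb i q) then a i else 0.
Definition sparse (b : nat -> R) (p : nat -> nat) (m : nat) : nat -> R :=
  fun i => rsum (fun j => if Nat.eqb (p j) i then b j else 0) m.

Record ND := mkND {
  Nm : (nat -> R) -> nat -> R;
  cc : R;
  cc_nn : 0 <= cc;
  N_ext : forall w u K, (forall i, (i < K)%nat -> w i = u i) -> Nm w K = Nm u K;
  N_ext0 : forall w K K', (K <= K')%nat -> (forall i, (K <= i < K')%nat -> w i = 0) -> Nm w K' = Nm w K;
  N_add : forall w u K, Nm (fun i => w i + u i) K <= Nm w K + Nm u K;
  N_scal : forall t w K, Nm (fun i => t * w i) K = Rabs t * Nm w K;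
  N_unit : forall w K, Nm w K <= rsum (fun i => Rabs (w i) * cc) K;
  N_sparse : forall b p m K, (forall i j, (i < j < m)%nat -> (p i < p j)%nat) ->
     (forall j, (j < m)%nat -> (p j < K)%nat) -> Nm (sparse b p m) K = Nm b m;
  N_bim : forall a p q n, (p <= q < n)%nat -> Nm (restr a p q) n <= Nm a n }.

Lemma Nm_zero : forall D K, Nm D (fun _ => 0) K = 0.
Proof. intros D K. rewrite (N_ext D (fun _ => 0) (fun i => 0 * (fun _ => 0) i)) by (intros; simpl; ring).
  rewrite N_scal, Rabs_R0. ring. Qed.

Lemma Nm_zero' : forall D w K, (forall i, (i < K)%nat -> w i = 0) -> Nm D w K = 0.
Proof. intros. rewrite (N_ext D w (fun _ => 0)) by auto. apply Nm_zero. Qed.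

Lemma Rabs_m1 : Rabs (-1) = 1.
Proof. unfold Rabs; destruct (Rcase_abs (-1)); lra. Qed.

Lemma Nm_nonneg : forall D w K, 0 <= Nm D w K.
Proof. intros D w K. pose proof (N_add D w (fun i => -1 * w i) K). rewrite N_scal in H.
  rewrite (N_ext D (fun i => w i + -1 * w i) (fun _ => 0)) in H by (intros; ring).
  rewrite Nm_zero in H. rewrite Rabs_m1 in H. lra. Qed.

Lemma Nm_opp : forall D w K, Nm D (fun i => - w i) K = Nm D w K.
Proof. intros. rewrite (N_ext D _ (fun i => -1 * w i)) by (intros; ring). rewrite N_scal, Rabs_m1. ring. Qed.

Lemma Nm_triang_sub : forall D w v K, Nm D w K <= Nm D v K + Nm D (fun i => w i - v i) K.
Proof. intros. rewrite (N_ext D w (fun i => v i + (w i - v i))) by (intros; ring). apply N_add. Qed.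

Definition fsR := { v : nat -> R | exists k, forall j, (k <= j)%nat -> v j = 0 }.

Lemma fs_eq : forall x y : fsR, proj1_sig x = proj1_sig y -> x = y.
Proof. intros [x Hx] [y Hy]; simpl; intros ->. f_equal. apply proof_irrelevance. Qed.

Definition fz : fsR := exist _ (fun _ => 0) (ex_intro _ 0%nat (fun j _ => eq_refl)).

Lemma fadd_pf : forall x y : fsR, exists k, forall j, (k <= j)%nat -> proj1_sig x j + proj1_sig y j = 0.
Proof. intros [x [kx Hx]] [y [ky Hy]]. exists (max kx ky). intros j Hj; simpl. rewrite Hx, Hy by lia. ring. Qed.
Definition fadd (x y : fsR) : fsR := exist _ (fun j => proj1_sig x j + proj1_sig y j) (fadd_pf x y).

Lemma fscal_pf : forall t (x : fsR), exists k, forall j, (k <= j)%nat -> t * proj1_sig x j = 0.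
Proof. intros t [x [kx Hx]]. exists kx. intros j Hj; simpl. rewrite Hx by lia. ring. Qed.
Definition fscal (t : R) (x : fsR) : fsR := exist _ (fun j => t * proj1_sig x j) (fscal_pf t x).

Definition fbound (x : fsR) : nat := proj1_sig (constructive_indefinite_description _ (proj2_sig x)).
Lemma fbound_spec : forall x j, (fbound x <= j)%nat -> proj1_sig x j = 0.
Proof. intros x. unfold fbound. destruct (constructive_indefinite_description _ _); simpl; auto. Qed.

Definition fnorm (D : ND) (x : fsR) : R := Nm D (proj1_sig x) (fbound x).

Lemma fnorm_eq : forall D x K, (forall j, (K <= j)%nat -> proj1_sig x j = 0) -> fnorm D x = Nm D (proj1_sig x) K.
Proof. intros D x K HK. unfold fnorm.
  rewrite <- (N_ext0 D (proj1_sig x) (fbound x) (max K (fbound x))) by (try lia; intros; apply fbound_spec; lia).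
  rewrite <- (N_ext0 D (proj1_sig x) K (max K (fbound x))) by (try lia; intros; apply HK; lia). auto. Qed.

Lemma f_add_assoc : forall x y z, fadd x (fadd y z) = fadd (fadd x y) z.
Proof. intros; apply fs_eq; simpl; apply functional_extensionality; intros; ring. Qed.
Lemma f_add_comm : forall x y, fadd x y = fadd y x.
Proof. intros; apply fs_eq; simpl; apply functional_extensionality; intros; ring. Qed.
Lemma f_add_0 : forall x, fadd x fz = x.
Proof. intros; apply fs_eq; simpl; apply functional_extensionality; intros; ring. Qed.
Lemma f_add_opp : forall x, fadd x (fscal (-1) x) = fz.
Proof. intros; apply fs_eq; simpl; apply functional_extensionality; intros; ring. Qed.
Lemma f_scal_1 : forall x, fscal 1 x = x.
Proof. intros; apply fs_eq; simpl; apply functional_extensionality; intros; ring. Qed.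
Lemma f_scal_assoc : forall a b x, fscal a (fscal b x) = fscal (a * b) x.
Proof. intros; apply fs_eq; simpl; apply functional_extensionality; intros; ring. Qed.
Lemma f_scal_distr_v : forall a x y, fscal a (fadd x y) = fadd (fscal a x) (fscal a y).
Proof. intros; apply fs_eq; simpl; apply functional_extensionality; intros; ring. Qed.
Lemma f_scal_distr_s : forall a b x, fscal (a + b) x = fadd (fscal a x) (fscal b x).
Proof. intros; apply fs_eq; simpl; apply functional_extensionality; intros; ring. Qed.

Lemma f_norm_scal : forall D a x, fnorm D (fscal a x) = Rabs a * fnorm D x.
Proof. intros. rewrite (fnorm_eq D (fscal a x) (fbound x)).
  - simpl. rewrite N_scal. auto.
  - intros j Hj; simpl. rewrite fbound_spec by auto. ring. Qed.

Lemma f_norm_triangle : forall D x y, fnorm D (fadd x y) <= fnorm D x + fnorm D y.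
Proof. intros. set (K := max (fbound x) (fbound y)).
  rewrite (fnorm_eq D (fadd x y) K), (fnorm_eq D x K), (fnorm_eq D y K); simpl.
  - apply N_add.
  - intros; apply fbound_spec; lia.
  - intros; apply fbound_spec; lia.
  - intros; rewrite !fbound_spec by lia; ring. Qed.

Definition FS (D : ND) : SNSpace :=
  {| car := fsR; vzero := fz; vadd := fadd; vscal := fscal; snorm := fnorm D;
     vadd_assoc := f_add_assoc; vadd_comm := f_add_comm; vadd_0 := f_add_0; vadd_opp := f_add_opp;
     vscal_1 := f_scal_1; vscal_assoc := f_scal_assoc; vscal_distr_v := f_scal_distr_v;
     vscal_distr_s := f_scal_distr_s; snorm_scal := f_norm_scal D; snorm_triangle := f_norm_triangle D |}.

Lemma fu_pf : forall j : nat, exists k, forall i, (k <= i)%nat -> (if Nat.eqb j i then 1 else 0) = 0.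
Proof. intros j. exists (S j). intros i Hi. replace (Nat.eqb j i) with false by (symmetry; apply Nat.eqb_neq; lia). auto. Qed.
Definition fu (j : nat) : fsR := exist _ (fun i => if Nat.eqb j i then 1 else 0) (fu_pf j).

Lemma lincomb_FS : forall D a n, proj1_sig (lincomb (FS D) a (fun j => fu j) n : fsR) = fun i => if Nat.ltb i n then a i else 0.
Proof. intros D a n. induction n; simpl.
  - apply functional_extensionality; intros i. destruct (Nat.ltb i 0) eqn:E; auto; apply Nat.ltb_lt in E; lia.
  - rewrite IHn. apply functional_extensionality; intros i.
    bdec; simpl; try lia; subst; ring. Qed.

Lemma snorm_FS : forall D a n, snorm (FS D) (lincomb (FS D) a (fun j => fu j) n) = Nm D a n.
Proof. intros. simpl. rewrite (fnorm_eq D _ n).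
  - rewrite lincomb_FS. apply N_ext. intros i Hi. replace (Nat.ltb i n) with true by (symmetry; apply Nat.ltb_lt; auto). auto.
  - intros j Hj. rewrite lincomb_FS. replace (Nat.ltb j n) with false by (symmetry; apply Nat.ltb_ge; auto). auto. Qed.

Lemma hamel_FS : forall D, hamel_basis (FS D) (fun j => fu j).
Proof. intros D. split.
  - intros a k H j Hj. assert (E := f_equal (fun x : fsR => proj1_sig x j) H). simpl in E.
    rewrite lincomb_FS in E. replace (Nat.ltb j k) with true in E by (symmetry; apply Nat.ltb_lt; auto). auto.
  - intros x. exists (proj1_sig (x : fsR)), (fbound x). apply fs_eq. rewrite lincomb_FS.
    apply functional_extensionality; intros i. destruct (Nat.ltb i (fbound x)) eqn:E; auto.
    apply Nat.ltb_ge in E. apply (fbound_spec x); auto. Qed.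


Lemma dot_add : forall K c u v, dot K c (fun i => u i + v i) = dot K c u + dot K c v.
Proof. intros. unfold dot. rewrite <- rsum_plus. apply rsum_ext; intros; ring. Qed.
Lemma dot_opp : forall K c u, dot K c (fun i => - u i) = - dot K c u.
Proof. intros. unfold dot. rewrite (rsum_ext _ (fun i => -1 * (c i * u i))) by (intros; ring).
  rewrite rsum_scal. ring. Qed.
Lemma dot_zero : forall K u, dot K (fun _ => 0) u = 0.
Proof. intros. unfold dot. apply rsum_zero. intros; ring. Qed.

Definition Dom (D : ND) (k : nat) (phi : nat -> R) : Prop :=
  forall u, Rabs (dot (S k) phi u) <= Nm D u (S k).

Lemma dom_exists : forall D k v, exists phi, Dom D k phi /\ dot (S k) phi v = Nm D v (S k).
Proof.
  intros D k v. destruct (HB (S k) (fun u => Nm D u (S k))) with (v := v) as [c [H1 H2]].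
  - split; [|split].
    + intros; apply N_ext; auto.
    + intros; apply N_add.
    + intros t u Ht. rewrite N_scal. rewrite Rabs_right by lra. auto.
  - exists c. split; auto. intros u. apply Rabs_le. split.
    + pose proof (H1 (fun i => - u i)). rewrite dot_opp, Nm_opp in H. lra.
    + apply H1.
Qed.

Definition tvals (q : nat) : list R := map (fun j => INR j / INR q - 1) (seq 0 (2 * q + 1)).

Lemma approx_aux : forall q N y, (1 <= q)%nat -> 0 <= y <= INR N / INR q ->
  exists j, (j <= N)%nat /\ Rabs (y - INR j / INR q) <= 1 / INR q.
Proof.
  intros q N y Hq. assert (Hq' : 0 < INR q) by (apply lt_0_INR; lia).
  induction N; intros Hy.
  - exists 0%nat. split; [lia|]. simpl in *. replace (0 / INR q) with 0 in * by (field; lra).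
    replace y with 0 by lra. rewrite Rminus_0_r, Rabs_R0. apply Rlt_le, Rdiv_lt_0_compat; lra.
  - destruct (Rle_dec y (INR N / INR q)).
    + destruct IHN as [j [Hj1 Hj2]]; [lra|]. exists j; split; [lia|auto].
    + exists (S N). split; [lia|]. rewrite S_INR in *.
      replace ((INR N + 1) / INR q) with (INR N / INR q + 1 / INR q) in * by (field; lra).
      apply Rabs_le. split; lra.
Qed.

Lemma tvals_approx : forall q x, (1 <= q)%nat -> -1 <= x <= 1 ->
  exists t, In t (tvals q) /\ Rabs (x - t) <= 1 / INR q.
Proof.
  intros q x Hq Hx. assert (Hq' : 0 < INR q) by (apply lt_0_INR; lia).
  destruct (approx_aux q (2 * q) (x + 1) Hq) as [j [Hj1 Hj2]].
  - rewrite mult_INR. replace (INR 2 * INR q / INR q) with 2 by (simpl; field; lra). lra.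
  - exists (INR j / INR q - 1). split.
    + unfold tvals. apply in_map_iff. exists j. split; auto. apply in_seq. lia.
    + replace (x - (INR j / INR q - 1)) with (x + 1 - INR j / INR q) by ring. auto.
Qed.

Fixpoint grid (q d : nat) : list (nat -> R) :=
  match d with
  | O => [fun _ => 0]
  | S d' => flat_map (fun v => map (fun t => fun i => if Nat.eqb i d' then t else v i) (tvals q)) (grid q d')
  end.

Lemma grid_approx : forall q d w, (1 <= q)%nat -> (forall i, (i < d)%nat -> -1 <= w i <= 1) ->
  exists v, In v (grid q d) /\ forall i, (i < d)%nat -> Rabs (w i - v i) <= 1 / INR q.
Proof.
  intros q d w Hq. induction d; intros Hw.
  - exists (fun _ => 0). split; [left; auto|]. intros; lia.
  - destruct IHd as [v [Hv1 Hv2]]; [intros; apply Hw; lia|].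
    destruct (tvals_approx q (w d) Hq (Hw d ltac:(lia))) as [t [Ht1 Ht2]].
    exists (fun i => if Nat.eqb i d then t else v i). split.
    + simpl. apply in_flat_map. exists v. split; auto. apply in_map_iff. exists t; auto.
    + intros i Hi. destruct (Nat.eqb_spec i d); [subst; auto|]. apply Hv2; lia.
Qed.

Definition hbf (D : ND) (k : nat) (v : nat -> R) : nat -> R :=
  proj1_sig (constructive_indefinite_description _ (dom_exists D k v)).
Lemma hbf_spec : forall D k v, Dom D k (hbf D k v) /\ dot (S k) (hbf D k v) v = Nm D v (S k).
Proof. intros. unfold hbf. destruct (constructive_indefinite_description _ _); simpl; auto. Qed.

Lemma net : forall D k, exists L : list (nat -> R),
  (forall phi, In phi L -> Dom D k phi) /\
  forall w, (forall i, (i <= k)%nat -> Rabs (w i) <= 1) ->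
    exists phi, In phi L /\ Nm D w (S k) - 2 * cc D / INR (S k) <= dot (S k) phi w.
Proof.
  intros D k. set (q := (S k * S k)%nat).
  assert (Hq : (1 <= q)%nat) by (unfold q; lia).
  assert (HSk : 0 < INR (S k)) by (apply lt_0_INR; lia).
  exists (map (hbf D k) (grid q (S k))). split.
  - intros phi Hphi. apply in_map_iff in Hphi. destruct Hphi as [v [<- _]]. apply hbf_spec.
  - intros w Hw. destruct (grid_approx q (S k) w Hq) as [v [Hv1 Hv2]].
    { intros i Hi. pose proof (Hw i ltac:(lia)). apply Rabs_le_between' in H || (unfold Rabs in H; destruct (Rcase_abs (w i)); lra). }
    exists (hbf D k v). split; [apply in_map; auto|].
    destruct (hbf_spec D k v) as [Hd He].
    assert (Ed : dot (S k) (hbf D k v) w = dot (S k) (hbf D k v) v + dot (S k) (hbf D k v) (fun i => w i - v i)).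
    { rewrite <- dot_add. unfold dot. apply rsum_ext. intros; ring. }
    pose proof (Hd (fun i => w i - v i)) as Hd2.
    pose proof (Nm_triang_sub D w v (S k)).
    assert (Hb : Nm D (fun i => w i - v i) (S k) <= cc D / INR (S k)).
    { eapply Rle_trans; [apply N_unit|]. eapply Rle_trans.
      - apply rsum_const_le with (B := 1 / INR q * cc D). intros i Hi.
        apply Rmult_le_compat_r; [apply cc_nn|]. apply Hv2; auto.
      - right. unfold q. rewrite mult_INR. field. lra. }
    rewrite Ed, He. apply Rabs_le_between' in Hd2 || (unfold Rabs in Hd2; destruct (Rcase_abs (dot (S k) (hbf D k v) (fun i => w i - v i))); lra).
Qed.


Definition Phi (D : ND) (k : nat) : list (nat -> R) :=
  proj1_sig (constructive_indefinite_description _ (net D k)).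
Lemma Phi_spec : forall D k, (forall phi, In phi (Phi D k) -> Dom D k phi) /\
  forall w, (forall i, (i <= k)%nat -> Rabs (w i) <= 1) ->
    exists phi, In phi (Phi D k) /\ Nm D w (S k) - 2 * cc D / INR (S k) <= dot (S k) phi w.
Proof. intros. unfold Phi. destruct (constructive_indefinite_description _ _); simpl; auto. Qed.

Lemma nth_dom : forall D k r, Dom D k (nth r (Phi D k) (fun _ => 0)).
Proof. intros D k r. destruct (Nat.lt_ge_cases r (length (Phi D k))).
  - apply (proj1 (Phi_spec D k)). apply nth_In; auto.
  - rewrite nth_overflow by auto. intros u. rewrite dot_zero, Rabs_R0. apply Nm_nonneg. Qed.

Fixpoint Tf (D : ND) (k : nat) : nat :=
  match k with O => O | S k' => (Tf D k' + S (length (Phi D k')))%nat end.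

Fixpoint lev (D : ND) (n : nat) : nat :=
  match n with
  | O => O
  | S n' => if Nat.leb (Tf D (S (lev D n'))) (S n') then S (lev D n') else lev D n'
  end.

Lemma Tf_mono : forall D k k', (k <= k')%nat -> (Tf D k <= Tf D k')%nat.
Proof. intros D k k' H. induction H; auto. simpl. lia. Qed.
Lemma Tf_S : forall D k, (Tf D k < Tf D (S k))%nat.
Proof. intros; simpl; lia. Qed.

Lemma lev_S : forall D n, lev D (S n) = if Nat.leb (Tf D (S (lev D n))) (S n) then S (lev D n) else lev D n.
Proof. reflexivity. Qed.

Lemma lev_spec : forall D n, (Tf D (lev D n) <= n < Tf D (S (lev D n)))%nat.
Proof. intros D n. induction n.
  - simpl. lia.
  - rewrite lev_S. destruct (Nat.leb_spec (Tf D (S (lev D n))) (S n)).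
    + pose proof (Tf_S D (S (lev D n))). lia.
    + lia.
Qed.

Lemma lev_unique : forall D k n, (Tf D k <= n < Tf D (S k))%nat -> lev D n = k.
Proof. intros D k n H. pose proof (lev_spec D n).
  destruct (Nat.lt_trichotomy (lev D n) k) as [Hl|[He|Hg]]; auto.
  - pose proof (Tf_mono D (S (lev D n)) k ltac:(lia)). lia.
  - pose proof (Tf_mono D (S k) (lev D n) ltac:(lia)). lia.
Qed.

Lemma lev_ge : forall D A n, (Tf D A <= n)%nat -> (A <= lev D n)%nat.
Proof. intros D A n H. pose proof (lev_spec D n). destruct (Nat.le_gt_cases A (lev D n)); auto.
  pose proof (Tf_mono D (S (lev D n)) A ltac:(lia)). lia. Qed.

Definition X (D : ND) (s1 s2 n : nat) : R :=
  if andb (Nat.leb s1 (lev D n)) (Nat.ltb (lev D n) s2)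
  then nth (n - Tf D (lev D n)) (Phi D (lev D n)) (fun _ => 0) s1 else 0.

Lemma X_c0 : forall D s1 s2, in_c0 (X D s1 s2).
Proof. intros D s1 s2 eps Heps. exists (Tf D s2). intros n Hn. unfold X, R_dist.
  pose proof (lev_ge D s2 n ltac:(lia)).
  replace (Nat.ltb (lev D n) s2) with false by (symmetry; apply Nat.ltb_ge; lia).
  rewrite Bool.andb_false_r. rewrite Rminus_0_r, Rabs_R0. auto. Qed.

Lemma dot_sparse : forall K phi b p m,
  dot K phi (sparse b p m) = rsum (fun j => b j * (if Nat.ltb (p j) K then phi (p j) else 0)) m.
Proof. intros K phi b p m. induction m.
  - unfold dot, sparse. simpl. try (apply rsum_zero; intros; ring).
  - change (sparse b p (S m)) with (fun i => sparse b p m i + (if Nat.eqb (p m) i then b m else 0)).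
    rewrite dot_add, IHm. simpl. f_equal. unfold dot.
    rewrite (rsum_ext _ (fun i => if Nat.eqb (p m) i then phi i * b m else 0)).
    + rewrite rsum_delta. destruct (Nat.ltb (p m) K); ring.
    + intros i _. destruct (Nat.eqb (p m) i); ring.
Qed.

Lemma sparse_zero : forall b p m i, (forall j, (j < m)%nat -> p j = i -> b j = 0) -> sparse b p m i = 0.
Proof. intros. unfold sparse. apply rsum_zero. intros j Hj. destruct (Nat.eqb_spec (p j) i); auto.
  Qed.

Lemma sparse_bound : forall b p m i, (forall i j, (i < j < m)%nat -> (p i < p j)%nat) ->
  (forall j, (j < m)%nat -> Rabs (b j) <= 1) -> Rabs (sparse b p m i) <= 1.
Proof. intros b p m i. induction m; intros Hp Hb.
  - unfold sparse; simpl. rewrite Rabs_R0; lra.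
  - change (sparse b p (S m) i) with (sparse b p m i + (if Nat.eqb (p m) i then b m else 0)).
    destruct (Nat.eqb_spec (p m) i).
    + rewrite sparse_zero. rewrite Rplus_0_l. apply Hb; lia.
      intros j Hj Hji. pose proof (Hp j m ltac:(lia)). lia.
    + rewrite Rplus_0_r. apply IHm; intros; [apply Hp|apply Hb]; lia.
Qed.

Lemma sparse_norm : forall D b p m k, (1 <= m)%nat -> (forall i j, (i < j < m)%nat -> (p i < p j)%nat) ->
  (forall j, (j < m)%nat -> b j <> 0 -> (p j <= k)%nat) ->
  Nm D (sparse b p m) (S k) = Nm D b m.
Proof. intros D b p m k Hm Hp Hb.
  assert (Hpm : forall j, (j < m)%nat -> (p j <= p (pred m))%nat).
  { intros j Hj. destruct (Nat.eq_dec j (pred m)); [subst; lia|]. pose proof (Hp j (pred m) ltac:(lia)). lia. }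
  rewrite <- (N_ext0 D (sparse b p m) (S k) (S k + S (p (pred m)))).
  - apply N_sparse; auto. intros j Hj. pose proof (Hpm j Hj). lia.
  - lia.
  - intros i Hi. apply sparse_zero. intros j Hj Hji. destruct (Req_dec (b j) 0); auto.
    pose proof (Hb j Hj H). lia.
Qed.

Lemma convex_int : forall (mk : nat -> bool) m,
  (forall i t j, (i <= t <= j)%nat -> (j < m)%nat -> mk i = true -> mk j = true -> mk t = true) ->
  (forall j, (j < m)%nat -> mk j = false) \/
  exists p q, (p <= q < m)%nat /\ forall j, (j < m)%nat -> mk j = andb (Nat.leb p j) (Nat.leb j q).
Proof.
  intros mk m. induction m; intros Hc.
  - left; intros; lia.
  - destruct IHm as [H0|[p [q [Hpq HJ]]]].
    { intros i t j H1 H2; apply Hc; lia. }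
    + destruct (mk m) eqn:Em.
      * right. exists m, m. split; [lia|]. intros j Hj. destruct (Nat.eq_dec j m).
        -- subst; rewrite Em; bdec; auto; lia.
        -- rewrite H0 by lia. bdec; auto; lia.
      * left. intros j Hj. destruct (Nat.eq_dec j m); [subst; auto|apply H0; lia].
    + destruct (mk m) eqn:Em.
      * right. exists p, m. split; [lia|]. intros j Hj.
        destruct (Nat.eq_dec j m); [subst; rewrite Em; bdec; auto; lia|].
        destruct (Nat.le_gt_cases p j).
        -- assert (mk j = true). { apply (Hc p j m); try lia; auto. rewrite HJ by lia. bdec; auto; lia. }
           rewrite H0. bdec; auto; lia.
        -- rewrite HJ by lia. bdec; auto; lia.
      * right. exists p, q. split; [lia|]. intros j Hj.
        destruct (Nat.eq_dec j m); [subst|apply HJ; lia].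
        rewrite Em. bdec; auto; lia.
Qed.


Lemma plegma_mono : forall M s m, plegma M s m -> forall i j, (i < j < m)%nat ->
  (fst (s i) < fst (s j))%nat /\ (snd (s i) < snd (s j))%nat.
Proof. intros M s m [_ [H2 _]] i j Hij. induction j; [lia|].
  destruct (Nat.eq_dec i j).
  - subst. apply H2. lia.
  - destruct IHj as [A B]; [lia|]. destruct (H2 j ltac:(lia)). lia. Qed.

Lemma plegma_cross : forall M s m, plegma M s m -> forall i j, (i < m)%nat -> (j < m)%nat ->
  (fst (s i) < snd (s j))%nat.
Proof. intros M s m Hp i j Hi Hj. pose proof Hp as [_ [_ H3]]. specialize (H3 ltac:(lia)).
  assert (fst (s i) <= fst (s (pred m)))%nat.
  { destruct (Nat.eq_dec i (pred m)); [subst; lia|]. pose proof (plegma_mono M s m Hp i (pred m) ltac:(lia)). lia. }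
  assert (snd (s 0%nat) <= snd (s j))%nat.
  { destruct j; [lia|]. pose proof (plegma_mono M s m Hp 0 (S j) ltac:(lia)). lia. }
  lia. Qed.

Lemma supnorm_bounds : forall y U L, (forall n, Rabs (y n) <= U) -> (exists n, L <= Rabs (y n)) ->
  L <= supnorm y <= U.
Proof. intros y U L HU [n0 HL].
  assert (Hs : is_lub (fun z => exists n, z = Rabs (y n)) (supnorm y)).
  { unfold supnorm. apply epsilon_spec.
    destruct (completeness (fun z => exists n, z = Rabs (y n))) as [r Hr].
    - exists U. intros z [n ->]. auto.
    - exists (Rabs (y 0%nat)). exists 0%nat; auto.
    - exists r; auto. }
  destruct Hs as [H1 H2]. split.
  - eapply Rle_trans; [apply HL|]. apply H1. exists n0; auto.
  - apply H2. intros z [n ->]. auto. Qed.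

Lemma value_eq : forall D m (s : nat -> nat * nat) a n,
  rsum (fun j => a j * X D (fst (s j)) (snd (s j)) n) m =
  dot (S (lev D n)) (nth (n - Tf D (lev D n)) (Phi D (lev D n)) (fun _ => 0))
      (sparse (fun j => if andb (Nat.leb (fst (s j)) (lev D n)) (Nat.ltb (lev D n) (snd (s j))) then a j else 0) (fun j => fst (s j)) m).
Proof. intros. rewrite dot_sparse. apply rsum_ext. intros j Hj. unfold X.
  destruct (Nat.leb_spec (fst (s j)) (lev D n)); destruct (Nat.ltb_spec (lev D n) (snd (s j))); simpl; try ring.
  replace (Nat.ltb (fst (s j)) (S (lev D n))) with true by (symmetry; apply Nat.ltb_lt; lia). ring. Qed.

Theorem generic : forall D, in_SM2_c0 (FS D) (fun j => fu j).
Proof.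
  intros D. split; [apply hamel_FS|].
  exists (X D), S. split; [intros; apply X_c0|]. split; [intros i j H; lia|].
  pose proof (cc_nn D) as Hcc.
  exists (fun l => (2 * cc D + 1) / (INR l + 1)). split; [|split].
  - intros l. apply Rdiv_lt_0_compat; pose proof (pos_INR l); lra.
  - intros eps Heps. destruct (INR_unbounded ((2 * cc D + 1) / eps)) as [N HN]. exists N.
    intros n Hn. unfold R_dist. rewrite Rminus_0_r.
    assert (HnN : INR N <= INR n) by (apply le_INR; lia).
    assert (Hpos : 0 < (2 * cc D + 1) / (INR n + 1)) by (apply Rdiv_lt_0_compat; pose proof (pos_INR n); lra).
    rewrite Rabs_right by lra.
    assert (E1 : (2 * cc D + 1) / eps * eps = 2 * cc D + 1) by (field; lra).
    apply Rmult_lt_reg_r with (INR n + 1); [pose proof (pos_INR n); lra|].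
    replace ((2 * cc D + 1) / (INR n + 1) * (INR n + 1)) with (2 * cc D + 1) by (field; pose proof (pos_INR n); lra).
    nra.
  - intros l m s a Hl Hm Hpl HM Ha.
    rewrite snorm_FS.
    assert (HP : forall i j, (i < j < m)%nat -> (fst (s i) < fst (s j))%nat) by (intros; apply (plegma_mono _ s m Hpl); auto).
    assert (Hup : forall n, Rabs (rsum (fun j => a j * X D (fst (s j)) (snd (s j)) n) m) <= Nm D a m).
    { intros n. rewrite (value_eq D m s a n).
      set (k := lev D n). fold k.
      set (mk := fun j => andb (Nat.leb (fst (s j)) k) (Nat.ltb k (snd (s j)))).
      eapply Rle_trans; [apply nth_dom|].
      rewrite sparse_norm; auto; [|lia|].
      2:{ intros j Hj Hb. destruct (Nat.leb_spec (fst (s j)) k); auto. simpl in Hb. exfalso; apply Hb; auto. }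
      destruct (convex_int mk m) as [H0|[p [q [Hpq Hj]]]].
      - intros i t j H1 H2 Hi Hjj. unfold mk in *. apply andb_prop in Hi, Hjj. destruct Hi as [Hi1 Hi2], Hjj as [Hj1 Hj2].
        apply Nat.leb_le in Hi1, Hj1. apply Nat.ltb_lt in Hi2, Hj2.
        assert (fst (s t) <= fst (s j))%nat by (destruct (Nat.eq_dec t j); [subst; lia|]; pose proof (HP t j ltac:(lia)); lia).
        assert (snd (s i) <= snd (s t))%nat.
        { destruct (Nat.eq_dec i t); [subst; lia|]. pose proof (plegma_mono _ s m Hpl i t ltac:(lia)). lia. }
        apply andb_true_intro; split; [apply Nat.leb_le|apply Nat.ltb_lt]; lia.
      - rewrite Nm_zero'; [apply Nm_nonneg|]. intros i Hi. pose proof (H0 i Hi). unfold mk in H. simpl. rewrite H. auto.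
      - eapply Rle_trans; [|apply (N_bim D a p q m Hpq)]. right. apply N_ext. intros i Hi.
        unfold restr. rewrite <- (Hj i Hi). unfold mk. auto. }
    set (k0 := fst (s (pred m))).
    assert (Hk0 : (l <= k0)%nat).
    { unfold k0. destruct (Nat.eq_dec (pred m) 0); [rewrite e; lia|].
      pose proof (HP 0%nat (pred m) ltac:(lia)). lia. }
    set (b0 := fun j => if andb (Nat.leb (fst (s j)) k0) (Nat.ltb k0 (snd (s j))) then a j else 0).
    assert (Hb0 : forall j, (j < m)%nat -> b0 j = a j).
    { intros j Hj. unfold b0. replace (Nat.leb (fst (s j)) k0) with true.
      - replace (Nat.ltb k0 (snd (s j))) with true; auto. symmetry. apply Nat.ltb_lt.
        unfold k0. apply (plegma_cross _ s m Hpl); lia.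
      - symmetry. apply Nat.leb_le. unfold k0. destruct (Nat.eq_dec j (pred m)); [subst; lia|].
        pose proof (HP j (pred m) ltac:(lia)). lia. }
    destruct (proj2 (Phi_spec D k0) (sparse b0 (fun j => fst (s j)) m)) as [phi [Hphi1 Hphi2]].
    { intros i Hi. apply sparse_bound; auto. intros j Hj. rewrite Hb0 by auto. apply Rabs_le. apply Ha; auto. }
    destruct (In_nth _ _ (fun _ => 0) Hphi1) as [r [Hr1 Hr2]].
    set (n := (Tf D k0 + r)%nat).
    assert (Hlev : lev D n = k0). { apply lev_unique. unfold n. simpl. lia. }
    assert (Hval : rsum (fun j => a j * X D (fst (s j)) (snd (s j)) n) m = dot (S k0) phi (sparse b0 (fun j => fst (s j)) m)).
    { rewrite (value_eq D m s a n). rewrite Hlev.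
      replace (n - Tf D k0)%nat with r by (unfold n; lia). rewrite Hr2. auto. }
    assert (Hnorm : Nm D (sparse b0 (fun j => fst (s j)) m) (S k0) = Nm D a m).
    { rewrite sparse_norm; auto; [|lia|].
      - apply N_ext. auto.
      - intros j Hj _. unfold k0. destruct (Nat.eq_dec j (pred m)); [subst; lia|].
        pose proof (HP j (pred m) ltac:(lia)). lia. }
    assert (Herr : 2 * cc D / INR (S k0) <= (2 * cc D + 1) / (INR l + 1)).
    { assert (INR l + 1 <= INR (S k0)) by (rewrite S_INR; apply Rplus_le_compat_r, le_INR; auto).
      assert (0 < INR l + 1) by (pose proof (pos_INR l); lra).
      unfold Rdiv. apply Rle_trans with (2 * cc D * / (INR l + 1)).
      - apply Rmult_le_compat_l; [lra|]. apply Rinv_le_contravar; lra.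
      - apply Rmult_le_compat_r; [apply Rlt_le, Rinv_0_lt_compat; lra|lra]. }
    destruct (supnorm_bounds (fun n0 => rsum (fun j => a j * X D (fst (s j)) (snd (s j)) n0) m)
               (Nm D a m) (Nm D a m - 2 * cc D / INR (S k0)) Hup) as [Hs1 Hs2].
    { exists n. rewrite Hval. rewrite Hnorm in Hphi2. eapply Rle_trans; [apply Hphi2|]. apply Rle_abs. }
    apply Rabs_le. split; lra.
Qed.


Lemma vscal0 : forall (E : SNSpace) (x : E), vscal E 0 x = vzero E.
Proof. intros E x. set (z := vscal E 0 x).
  assert (Hz : vadd E z z = z). { unfold z. rewrite <- vscal_distr_s. f_equal. ring. }
  assert (H : vadd E (vadd E z z) (vscal E (-1) z) = vadd E z (vadd E z (vscal E (-1) z))) by (rewrite vadd_assoc; auto).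
  rewrite Hz, !vadd_opp, vadd_0 in H. auto. Qed.

Lemma vscal_zero : forall (E : SNSpace) t, vscal E t (vzero E) = vzero E.
Proof. intros. rewrite <- (vscal0 E (vzero E)). rewrite vscal_assoc. rewrite Rmult_0_r. auto. Qed.

Lemma vadd_0l : forall (E : SNSpace) (x : E), vadd E (vzero E) x = x.
Proof. intros. rewrite vadd_comm. apply vadd_0. Qed.

Lemma snorm_zero : forall (E : SNSpace), snorm E (vzero E) = 0.
Proof. intros. rewrite <- (vscal0 E (vzero E)). rewrite snorm_scal, Rabs_R0. ring. Qed.

Lemma snorm_nn : forall (E : SNSpace) (x : E), 0 <= snorm E x.
Proof. intros. pose proof (snorm_triangle E x (vscal E (-1) x)). rewrite vadd_opp, snorm_zero, snorm_scal, Rabs_m1 in H. lra. Qed.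

Lemma swap4 : forall (E : SNSpace) (a b c d : E), vadd E (vadd E a b) (vadd E c d) = vadd E (vadd E a c) (vadd E b d).
Proof. intros. rewrite <- !vadd_assoc. f_equal. rewrite !vadd_assoc. f_equal. apply vadd_comm. Qed.

Lemma lincomb_add : forall (E : SNSpace) e w u K,
  lincomb E (fun i => w i + u i) e K = vadd E (lincomb E w e K) (lincomb E u e K).
Proof. intros. induction K; simpl.
  - rewrite vadd_0; auto.
  - rewrite IHK, vscal_distr_s. apply swap4. Qed.

Lemma lincomb_scal : forall (E : SNSpace) e t w K,
  lincomb E (fun i => t * w i) e K = vscal E t (lincomb E w e K).
Proof. intros. induction K; simpl.
  - rewrite vscal_zero; auto.
  - rewrite IHK, vscal_distr_v, vscal_assoc. auto. Qed.

Lemma lincomb_ext : forall (E : SNSpace) e w u K, (forall i, (i < K)%nat -> w i = u i) ->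
  lincomb E w e K = lincomb E u e K.
Proof. intros E e w u K. induction K; intros H; simpl; auto. rewrite IHK by (intros; apply H; lia). rewrite H by lia. auto. Qed.

Lemma lincomb_ext0 : forall (E : SNSpace) e w K K', (K <= K')%nat -> (forall i, (K <= i < K')%nat -> w i = 0) ->
  lincomb E w e K' = lincomb E w e K.
Proof. intros E e w K K' HK. induction HK; intros H; auto. simpl. rewrite IHHK by (intros; apply H; lia).
  rewrite H by lia. rewrite vscal0, vadd_0. auto. Qed.

Lemma lincomb_delta : forall (E : SNSpace) e j (beta : R) K,
  lincomb E (fun i => if Nat.eqb j i then beta else 0) e K = if Nat.ltb j K then vscal E beta (e j) else vzero E.
Proof. intros. induction K; simpl.
  - destruct (Nat.ltb_spec j 0); auto; lia.
  - rewrite IHK. destruct (Nat.eqb_spec j K).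
    + subst. destruct (Nat.ltb_spec K K); [lia|]. destruct (Nat.ltb_spec K (S K)); [|lia]. apply vadd_0l.
    + rewrite vscal0, vadd_0. destruct (Nat.ltb_spec j K); destruct (Nat.ltb_spec j (S K)); auto; lia. Qed.

Lemma lincomb_sparse : forall (E : SNSpace) e b p m K, (forall j, (j < m)%nat -> (p j < K)%nat) ->
  lincomb E (sparse b p m) e K = lincomb E b (fun j => e (p j)) m.
Proof. intros E e b p m K. induction m; intros H.
  - unfold sparse. simpl. rewrite (lincomb_ext E e _ (fun i => 0 * 0)) by (intros; simpl; ring).
    rewrite (lincomb_scal E e 0 (fun _ => 0)). apply vscal0.
  - change (sparse b p (S m)) with (fun i => sparse b p m i + (if Nat.eqb (p m) i then b m else 0)).
    rewrite lincomb_add, IHm by (intros; apply H; lia). rewrite lincomb_delta.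
    destruct (Nat.ltb_spec (p m) K); [auto|]. pose proof (H m ltac:(lia)). lia. Qed.

Lemma e_norm_const : forall (E : SNSpace) e, spreading E e -> forall i, snorm E (e i) = snorm E (e 0%nat).
Proof. intros E e Hs i. pose proof (Hs 1%nat (fun _ => i) (fun _ => 1) ltac:(intros; lia)). simpl in H.
  rewrite !vadd_0l, !vscal_1 in H. auto. Qed.

Definition Nm0 (E : SNSpace) (e : nat -> E) (w : nat -> R) (K : nat) : R := snorm E (lincomb E w e K).

Lemma Nm0_ext : forall E e w u K, (forall i, (i < K)%nat -> w i = u i) -> Nm0 E e w K = Nm0 E e u K.
Proof. intros. unfold Nm0. rewrite (lincomb_ext E e w u K); auto. Qed.
Lemma Nm0_ext0 : forall E e w K K', (K <= K')%nat -> (forall i, (K <= i < K')%nat -> w i = 0) -> Nm0 E e w K' = Nm0 E e w K.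
Proof. intros. unfold Nm0. rewrite (lincomb_ext0 E e w K K'); auto. Qed.
Lemma Nm0_add : forall E e w u K, Nm0 E e (fun i => w i + u i) K <= Nm0 E e w K + Nm0 E e u K.
Proof. intros. unfold Nm0. rewrite lincomb_add. apply snorm_triangle. Qed.
Lemma Nm0_scal : forall E e t w K, Nm0 E e (fun i => t * w i) K = Rabs t * Nm0 E e w K.
Proof. intros. unfold Nm0. rewrite lincomb_scal. apply snorm_scal. Qed.
Lemma Nm0_nn : forall E e w K, 0 <= Nm0 E e w K.
Proof. intros. apply snorm_nn. Qed.
Lemma Nm0_unit : forall E e, spreading E e -> forall w K, Nm0 E e w K <= rsum (fun i => Rabs (w i) * snorm E (e 0%nat)) K.
Proof. intros E e Hs w K. unfold Nm0. induction K; simpl.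
  - rewrite snorm_zero; lra.
  - eapply Rle_trans; [apply snorm_triangle|]. rewrite snorm_scal, (e_norm_const E e Hs K). lra. Qed.
Lemma Nm0_sparse : forall E e, spreading E e -> forall b p m K, (forall i j, (i < j < m)%nat -> (p i < p j)%nat) ->
  (forall j, (j < m)%nat -> (p j < K)%nat) -> Nm0 E e (sparse b p m) K = Nm0 E e b m.
Proof. intros E e Hs b p m K Hp HK. unfold Nm0. rewrite lincomb_sparse by auto. symmetry. apply Hs. auto. Qed.

Definition ND_E (E : SNSpace) (e : nat -> E) (Hs : spreading E e) (Hb : bimonotone E e) : ND :=
  {| Nm := Nm0 E e; cc := snorm E (e 0%nat); cc_nn := snorm_nn E (e 0%nat);
     N_ext := Nm0_ext E e; N_ext0 := Nm0_ext0 E e; N_add := Nm0_add E e; N_scal := Nm0_scal E e;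
     N_unit := Nm0_unit E e Hs; N_sparse := Nm0_sparse E e Hs; N_bim := Hb |}.

Theorem part2 : forall (E : SNSpace) (e : nat -> E), spreading E e -> bimonotone E e ->
  exists (F : SNSpace) (f : nat -> F), in_SM2_c0 F f /\ isometrically_equivalent E F e f.
Proof. intros E e Hs Hb. exists (FS (ND_E E e Hs Hb)), (fun j => fu j). split.
  - apply generic.
  - intros a n. rewrite snorm_FS. simpl. auto. Qed.


Fixpoint mxp (f : nat -> nat -> R) (q p : nat) : R :=
  match p with O => f O q | S p' => Rmax (f (S p') q) (mxp f q p') end.
Fixpoint mxq (f : nat -> nat -> R) (Q : nat) : R :=
  match Q with O => 0 | S Q' => Rmax (mxq f Q') (mxp f Q' Q') end.

Lemma mxp_ge : forall f q p0 p, (p <= p0)%nat -> f p q <= mxp f q p0.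
Proof. intros f q p0. induction p0; intros p Hp; simpl.
  - replace p with 0%nat by lia. lra.
  - destruct (Nat.eq_dec p (S p0)); [subst; apply Rmax_Rle; left; lra|].
    apply Rmax_Rle; right. apply IHp0; lia. Qed.
Lemma mxp_le : forall f q p0 U, (forall p, (p <= p0)%nat -> f p q <= U) -> mxp f q p0 <= U.
Proof. intros f q p0 U H. induction p0; simpl; [apply H; lia|]. apply Rmax_lub; [apply H; lia|apply IHp0; intros; apply H; lia]. Qed.
Lemma mxq_ge : forall f Q p q, (p <= q < Q)%nat -> f p q <= mxq f Q.
Proof. intros f Q. induction Q; intros p q H; [lia|]. simpl. destruct (Nat.eq_dec q Q).
  - subst. apply Rmax_Rle; right. apply mxp_ge; lia.
  - apply Rmax_Rle; left. apply IHQ; lia. Qed.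
Lemma mxq_le : forall f Q U, 0 <= U -> (forall p q, (p <= q < Q)%nat -> f p q <= U) -> mxq f Q <= U.
Proof. intros f Q U HU H. induction Q; simpl; auto. apply Rmax_lub.
  - apply IHQ; intros; apply H; lia.
  - apply mxp_le. intros; apply H; lia. Qed.
Lemma mxq_nn : forall f Q, 0 <= mxq f Q.
Proof. intros f Q. induction Q; simpl; [lra|]. apply Rmax_Rle; left; auto. Qed.
Lemma mxq_ext : forall f g Q, (forall p q, (p <= q < Q)%nat -> f p q = g p q) -> mxq f Q = mxq g Q.
Proof. intros f g Q H. apply Rle_antisym; apply mxq_le; try apply mxq_nn; intros p q Hpq.
  - rewrite H by auto. apply mxq_ge; auto.
  - rewrite <- H by auto. apply mxq_ge; auto. Qed.

Definition Hn (E : SNSpace) (e : nat -> E) (w : nat -> R) (K : nat) : R :=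
  mxq (fun p q => Nm0 E e (restr w p q) K) K.

Lemma Hn_ge : forall E e w K p q, (p <= q < K)%nat -> Nm0 E e (restr w p q) K <= Hn E e w K.
Proof. intros. unfold Hn. apply (mxq_ge (fun p q => Nm0 E e (restr w p q) K)); auto. Qed.
Lemma Hn_le : forall E e w K U, 0 <= U -> (forall p q, (p <= q < K)%nat -> Nm0 E e (restr w p q) K <= U) -> Hn E e w K <= U.
Proof. intros. unfold Hn. apply mxq_le; auto. Qed.
Lemma Hn_nn : forall E e w K, 0 <= Hn E e w K.
Proof. intros. apply mxq_nn. Qed.

Lemma Nm0_zero' : forall E e w K, (forall i, (i < K)%nat -> w i = 0) -> Nm0 E e w K = 0.
Proof. intros. rewrite (Nm0_ext E e w (fun i => 0 * 0)) by (intros; rewrite H; auto; ring).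
  rewrite (Nm0_scal E e 0 (fun _ => 0)). rewrite Rabs_R0; ring. Qed.

Lemma Hn_ext : forall E e w u K, (forall i, (i < K)%nat -> w i = u i) -> Hn E e w K = Hn E e u K.
Proof. intros. unfold Hn. apply mxq_ext. intros p q _. apply Nm0_ext. intros i Hi. unfold restr. rewrite H; auto. Qed.

Lemma Hn_ext0 : forall E e w K K', (K <= K')%nat -> (forall i, (K <= i < K')%nat -> w i = 0) -> Hn E e w K' = Hn E e w K.
Proof. intros E e w K K' HK Hw. apply Rle_antisym.
  - apply Hn_le; [apply Hn_nn|]. intros p q Hpq.
    rewrite (Nm0_ext0 E e _ K K') by (auto; intros i Hi; unfold restr; rewrite Hw by auto; destruct (_ && _)%bool; auto).
    destruct (Nat.lt_ge_cases q K); [apply Hn_ge; lia|].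
    destruct (Nat.lt_ge_cases p K).
    + rewrite (Nm0_ext E e _ (restr w p (pred K))). apply Hn_ge; lia.
      intros i Hi. unfold restr. bdec; simpl; auto; lia.
    + rewrite Nm0_zero'. apply Hn_nn. intros i Hi. unfold restr. bdec; simpl; auto; lia.
  - apply Hn_le; [apply Hn_nn|]. intros p q Hpq.
    rewrite <- (Nm0_ext0 E e _ K K') by (auto; intros i Hi; unfold restr; rewrite Hw by auto; destruct (_ && _)%bool; auto).
    apply Hn_ge; lia. Qed.

Lemma Hn_add : forall E e w u K, Hn E e (fun i => w i + u i) K <= Hn E e w K + Hn E e u K.
Proof. intros. apply Hn_le. pose proof (Hn_nn E e w K); pose proof (Hn_nn E e u K); lra.
  intros p q Hpq. rewrite (Nm0_ext E e _ (fun i => restr w p q i + restr u p q i)).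
  - eapply Rle_trans; [apply Nm0_add|]. apply Rplus_le_compat; apply Hn_ge; auto.
  - intros i _. unfold restr. destruct (_ && _)%bool; ring. Qed.

Lemma Hn_scal_le : forall E e t w K, Hn E e (fun i => t * w i) K <= Rabs t * Hn E e w K.
Proof. intros. apply Hn_le. pose proof (Hn_nn E e w K); pose proof (Rabs_pos t); nra.
  intros p q Hpq. rewrite (Nm0_ext E e _ (fun i => t * restr w p q i)).
  - rewrite Nm0_scal. apply Rmult_le_compat_l; [apply Rabs_pos|]. apply Hn_ge; auto.
  - intros i _. unfold restr. destruct (_ && _)%bool; ring. Qed.

Lemma Hn_scal : forall E e t w K, Hn E e (fun i => t * w i) K = Rabs t * Hn E e w K.
Proof. intros. apply Rle_antisym; [apply Hn_scal_le|].
  destruct (Req_dec t 0). { subst. rewrite Rabs_R0, Rmult_0_l. apply Hn_nn. }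
  pose proof (Hn_scal_le E e (/ t) (fun i => t * w i) K).
  rewrite (Hn_ext E e (fun i => / t * (t * w i)) w) in H0 by (intros; field; auto).
  rewrite Rabs_inv in H0. assert (0 < Rabs t) by (apply Rabs_pos_lt; auto).
  apply Rmult_le_compat_l with (r := Rabs t) in H0; [|lra].
  replace (Rabs t * (/ Rabs t * Hn E e (fun i => t * w i) K)) with (Hn E e (fun i => t * w i) K) in H0 by (field; lra).
  lra. Qed.

Lemma rsum_nn : forall f k, (forall i, (i < k)%nat -> 0 <= f i) -> 0 <= rsum f k.
Proof. intros. replace 0 with (rsum (fun _ => 0) k). apply rsum_le; auto. apply rsum_zero; auto. Qed.

Lemma Hn_unit : forall E e, spreading E e -> forall w K, Hn E e w K <= rsum (fun i => Rabs (w i) * snorm E (e 0%nat)) K.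
Proof. intros E e Hs w K. apply Hn_le.
  - apply rsum_nn. intros. pose proof (Rabs_pos (w i)). pose proof (snorm_nn E (e 0%nat)). nra.
  - intros p q Hpq. eapply Rle_trans; [apply Nm0_unit; auto|]. apply rsum_le. intros i _.
    apply Rmult_le_compat_r; [apply snorm_nn|]. unfold restr. destruct (_ && _)%bool; [lra|]. rewrite Rabs_R0. apply Rabs_pos. Qed.

Lemma restr_sparse : forall b p m al be i,
  restr (sparse b p m) al be i = sparse (fun j => if andb (Nat.leb al (p j)) (Nat.leb (p j) be) then b j else 0) p m i.
Proof. intros. unfold restr, sparse. destruct (andb (Nat.leb al i) (Nat.leb i be)) eqn:Ec.
  - apply rsum_ext. intros j _. destruct (Nat.eqb_spec (p j) i); auto. subst. rewrite Ec. auto.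
  - symmetry. apply rsum_zero. intros j _. destruct (Nat.eqb_spec (p j) i); auto. subst. rewrite Ec. auto. Qed.

Lemma sparse_ext : forall b b' p m i, (forall j, (j < m)%nat -> b j = b' j) -> sparse b p m i = sparse b' p m i.
Proof. intros. unfold sparse. apply rsum_ext. intros j Hj. rewrite H; auto. Qed.

Lemma Hn_sparse : forall E e, spreading E e -> forall b p m K, (forall i j, (i < j < m)%nat -> (p i < p j)%nat) ->
  (forall j, (j < m)%nat -> (p j < K)%nat) -> Hn E e (sparse b p m) K = Hn E e b m.
Proof. intros E e Hs b p m K Hp HK. apply Rle_antisym.
  - apply Hn_le; [apply Hn_nn|]. intros al be Hab.
    rewrite (Nm0_ext E e _ (sparse (fun j => if andb (Nat.leb al (p j)) (Nat.leb (p j) be) then b j else 0) p m))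
      by (intros; apply restr_sparse).
    rewrite Nm0_sparse by auto.
    set (mk := fun j => andb (Nat.leb al (p j)) (Nat.leb (p j) be)).
    destruct (convex_int mk m) as [H0|[j1 [j2 [Hj Hjj]]]].
    + intros i t j H1 H2 Hi Hjj. unfold mk in *. apply andb_prop in Hi, Hjj. destruct Hi as [Hi1 Hi2], Hjj as [Hj1 Hj2].
      apply Nat.leb_le in Hi1, Hj1, Hi2, Hj2.
      assert (p t <= p j)%nat by (destruct (Nat.eq_dec t j); [subst; lia|]; pose proof (Hp t j ltac:(lia)); lia).
      assert (p i <= p t)%nat by (destruct (Nat.eq_dec i t); [subst; lia|]; pose proof (Hp i t ltac:(lia)); lia).
      apply andb_true_intro; split; apply Nat.leb_le; lia.
    + rewrite Nm0_zero'. apply Hn_nn. intros i Hi. pose proof (H0 i Hi). unfold mk in H. rewrite H. auto.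
    + rewrite (Nm0_ext E e _ (restr b j1 j2)). apply Hn_ge; auto.
      intros i Hi. unfold restr. rewrite <- Hjj by auto. unfold mk. auto.
  - apply Hn_le; [apply Hn_nn|]. intros j1 j2 Hj.
    rewrite <- Nm0_sparse with (p := p) (K := K) by auto.
    rewrite (Nm0_ext E e _ (restr (sparse b p m) (p j1) (p j2))). apply Hn_ge.
    { pose proof (HK j2 ltac:(lia)). destruct (Nat.eq_dec j1 j2); [subst; lia|]. pose proof (Hp j1 j2 ltac:(lia)). lia. }
    intros i _. rewrite restr_sparse. apply sparse_ext. intros j Hjm. unfold restr.
    assert (E1 : forall x y, (x <= y)%nat -> (x < m)%nat -> (y < m)%nat -> (p x <= p y)%nat).
    { intros x y Hxy Hx Hy. destruct (Nat.eq_dec x y); [subst; lia|]. pose proof (Hp x y ltac:(lia)); lia. }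
    assert (E2 : forall x y, (x < m)%nat -> (y < m)%nat -> (p x <= p y)%nat -> (x <= y)%nat).
    { intros x y Hx Hy Hxy. destruct (Nat.le_gt_cases x y); auto. pose proof (Hp y x ltac:(lia)); lia. }
    destruct (Nat.leb_spec j1 j); destruct (Nat.leb_spec j j2); destruct (Nat.leb_spec (p j1) (p j)); destruct (Nat.leb_spec (p j) (p j2)); simpl; auto;
    try (pose proof (E1 j1 j ltac:(lia) ltac:(lia) ltac:(lia)); lia);
    try (pose proof (E1 j j2 ltac:(lia) ltac:(lia) ltac:(lia)); lia);
    try (pose proof (E2 j1 j ltac:(lia) ltac:(lia) ltac:(lia)); lia);
    try (pose proof (E2 j j2 ltac:(lia) ltac:(lia) ltac:(lia)); lia).
Qed.

Lemma Hn_bim : forall E e a al be n, (al <= be < n)%nat -> Hn E e (restr a al be) n <= Hn E e a n.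
Proof. intros E e a al be n Hab. apply Hn_le; [apply Hn_nn|]. intros p q Hpq.
  destruct (Nat.le_gt_cases (max al p) (min be q)).
  - rewrite (Nm0_ext E e _ (restr a (max al p) (min be q))). apply Hn_ge; lia.
    intros i _. unfold restr. bdec; simpl; auto; lia.
  - rewrite Nm0_zero'. apply Hn_nn. intros i _. unfold restr. bdec; simpl; auto; lia. Qed.

Definition ND_H (E : SNSpace) (e : nat -> E) (Hs : spreading E e) : ND :=
  {| Nm := Hn E e; cc := snorm E (e 0%nat); cc_nn := snorm_nn E (e 0%nat);
     N_ext := Hn_ext E e; N_ext0 := Hn_ext0 E e; N_add := Hn_add E e; N_scal := Hn_scal E e;
     N_unit := Hn_unit E e Hs; N_sparse := Hn_sparse E e Hs; N_bim := Hn_bim E e |}.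

Theorem part1 : forall (E : SNSpace) (e : nat -> E), schauder_basic E e -> spreading E e ->
  exists (F : SNSpace) (f : nat -> F), in_SM2_c0 F f /\ equivalent E F e f.
Proof. intros E e [_ [Ks HKs]] Hs. exists (FS (ND_H E e Hs)), (fun j => fu j). split; [apply generic|].
  exists 1, (2 * Rabs Ks + 1). split; [lra|]. split; [pose proof (Rabs_pos Ks); lra|].
  intros a n. rewrite snorm_FS. simpl. fold (Nm0 E e a n). split.
  - rewrite Rmult_1_l. destruct n.
    + unfold Nm0. simpl. rewrite snorm_zero. apply Hn_nn.
    + rewrite (Nm0_ext E e a (restr a 0 n)). apply Hn_ge; lia.
      intros i Hi. unfold restr. bdec; simpl; auto; lia.
  - apply Hn_le. pose proof (Rabs_pos Ks); pose proof (Nm0_nn E e a n); nra.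
    intros p q Hpq.
    rewrite (Nm0_ext E e _ (fun i => (if Nat.leb i q then a i else 0) + (-1) * (if Nat.ltb i p then a i else 0))).
    2:{ intros i _. unfold restr. bdec; simpl; try lia; ring. }
    eapply Rle_trans; [apply Nm0_add|]. rewrite Nm0_scal, Rabs_m1, Rmult_1_l.
    rewrite (Nm0_ext0 E e _ (S q) n) by (try lia; intros i Hi; bdec; auto; lia).
    rewrite (Nm0_ext0 E e _ p n) by (try lia; intros i Hi; bdec; auto; lia).
    rewrite (Nm0_ext E e _ a (S q)) by (intros i Hi; bdec; auto; lia).
    rewrite (Nm0_ext E e _ a p) by (intros i Hi; bdec; auto; lia).
    pose proof (HKs a (S q) n ltac:(lia)). pose proof (HKs a p n ltac:(lia)).
    fold (Nm0 E e a (S q)) (Nm0 E e a p) (Nm0 E e a n) in *.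
    pose proof (Nm0_nn E e a n). pose proof (Rle_abs Ks).
    assert (Ks * Nm0 E e a n <= Rabs Ks * Nm0 E e a n) by nra. nra.
Qed.

Theorem mainTheorem16 :
  forall (E : SNSpace) (e : nat -> E),
    schauder_basic E e -> spreading E e ->
    (exists (F : SNSpace) (f : nat -> F), in_SM2_c0 F f /\ equivalent E F e f) /\
    (bimonotone E e ->
       exists (F : SNSpace) (f : nat -> F), in_SM2_c0 F f /\ isometrically_equivalent E F e f).
Proof. intros E e Hsb Hs. split; [apply part1; auto|]. intros Hb. apply part2; auto. Qed.
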